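(* Let $\mathbf A$ be a nonzero $m\times n$ real matrix and $\mathbf b\ne\mathbf 0$ such that $\mathbf A\mathbf x=\mathbf b$ is consistent, let $\alpha>0$, and let $\mathbf x^*$ be the unique solution of (P2). Let $f(\mathbf y):=-\mathbf b^\top\mathbf y+\frac{\alpha}{2}\|\mathrm{shrink}(\mathbf A^\top\mathbf y)\|_2^2$, so $\nabla f(\mathbf y)=-\mathbf b+\alpha\mathbf A\,\mathrm{shrink}(\mathbf A^\top\mathbf y)$, and let $\mathcal Y^*:=\{\mathbf y\in\mathbb R^m:\alpha\,\mathrm{shrink}(\mathbf A^\top\mathbf y)=\mathbf x^*\}$. Then for all $\mathbf y\in\mathbb R^m$, $$\langle\mathbf y-\mathrm{Proj}_{\mathcal Y^*}(\mathbf y),\nabla f(\mathbf y)\rangle\ge\nu\|\mathbf y-\mathrm{Proj}_{\mathcal Y^*}(\mathbf y)\|_2^2,\qquad \nu:=\lambda_{\mathbf A}\cdot\min_{i\in\mathrm{supp}(\mathbf x^* )}\frac{\alpha|x^*_i|}{|x^*_i|+2\alpha}>0,$$ where $\lambda_{\mathbf A}:=\min\{\lambda_{\min}^{++}(\mathbf C\mathbf C^\top):\ \mathbf C\text{ is a nonzero submatrix of }\mathbf A\text{ formed by a subset of its columns}\}$.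
   Context: Problem (P2) is $\min_{\mathbf x}\{\|\mathbf x\|_1+\frac{1}{2\alpha}\|\mathbf x\|_2^2:\ \mathbf A\mathbf x=\mathbf b\}$; $f$ is the objective of its Lagrange dual, and $\mathcal Y^*$ is the (nonempty, closed, convex) set of minimizers of $f$. $\mathrm{shrink}(\mathbf z)=\mathrm{sign}(\mathbf z)\max\{|\mathbf z|-\mathbf 1,\mathbf 0\}$ componentwise. $\mathrm{Proj}_{\mathcal Y^*}$ is Euclidean projection onto $\mathcal Y^*$. $\lambda_{\min}^{++}(\mathbf S)$ is the smallest strictly positive eigenvalue of a nonzero positive semidefinite $\mathbf S$. *)

(* Defs.v *)
From HB Require Import structures.
From mathcomp Require Import all_boot all_order all_algebra.
Set Implicit Arguments. Unset Strict Implicit. Unset Printing Implicit Defensive.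
Import Order.TTheory GRing.Theory Num.Theory.
Local Open Scope ring_scope.

Section Defs.
Variable R : rcfType.

Definition shrink n (z : 'cV[R]_n) : 'cV[R]_n :=
  \col_i (Num.sg (z i 0) * Num.max (`|z i 0| - 1) 0).

Definition norm1 n (x : 'cV[R]_n) : R := \sum_i `|x i 0|.
Definition norm2sq n (x : 'cV[R]_n) : R := \sum_i (x i 0) ^+ 2.
Definition inner n (u v : 'cV[R]_n) : R := \sum_i u i 0 * v i 0.

Definition P2obj n (alpha : R) (x : 'cV[R]_n) : R :=
  norm1 x + (2 * alpha)^-1 * norm2sq x.

Definition P2sol m n (A : 'M[R]_(m, n)) (b : 'cV[R]_m) (alpha : R) (x : 'cV[R]_n) :=
  A *m x = b /\ forall x' : 'cV[R]_n, A *m x' = b -> P2obj alpha x <= P2obj alpha x'.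

Definition fdual m n (A : 'M[R]_(m, n)) (b : 'cV[R]_m) (alpha : R) (y : 'cV[R]_m) : R :=
  - inner b y + alpha / 2 * norm2sq (shrink (A^T *m y)).
Definition gradf m n (A : 'M[R]_(m, n)) (b : 'cV[R]_m) (alpha : R) (y : 'cV[R]_m)
  : 'cV[R]_m := - b + alpha *: (A *m shrink (A^T *m y)).

Definition Ystar m n (A : 'M[R]_(m, n)) (alpha : R) (xs : 'cV[R]_n) (y : 'cV[R]_m) : Prop :=
  alpha *: shrink (A^T *m y) = xs.

Definition is_proj m (S : 'cV[R]_m -> Prop) (y p : 'cV[R]_m) : Prop :=
  S p /\ forall q, S q -> norm2sq (y - p) <= norm2sq (y - q).

Definition lambda_min_pp k (M : 'M[R]_k) (l : R) : Prop :=
  eigenvalue M l /\ 0 < l /\ forall l', eigenvalue M l' -> 0 < l' -> l <= l'.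

(* C is a nonzero submatrix of A formed by a subset of its columns:
   C = colsub f A with f injective (column selection, possibly reordered) *)
Definition lambdaA_set m n (A : 'M[R]_(m, n)) (l : R) : Prop :=
  exists k (f : 'I_k -> 'I_n), injective f /\ colsub f A != 0 /\
    lambda_min_pp (colsub f A *m (colsub f A)^T) l.

Definition is_lambdaA m n (A : 'M[R]_(m, n)) (l : R) : Prop :=
  lambdaA_set A l /\ forall l', lambdaA_set A l' -> l <= l'.

Definition is_supp_min n (alpha : R) (x : 'cV[R]_n) (c : R) : Prop :=
  (exists i, x i 0 != 0 /\ c = alpha * `|x i 0| / (`|x i 0| + 2 * alpha)) /\
  forall i, x i 0 != 0 -> c <= alpha * `|x i 0| / (`|x i 0| + 2 * alpha).

End Defs.

(* Main.v *)
Require Import Defs.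
From HB Require Import structures.
From mathcomp Require Import all_boot all_order all_algebra.
From mathcomp Require Import spectral complex.
From mathcomp Require Import ring lra.
From Stdlib Require Import Classical.
Import Order.TTheory GRing.Theory Num.Theory.
Local Open Scope ring_scope.

Module SpecPart.
Import Num.Def.
Local Open Scope sesquilinear_scope.
Local Open Scope sesquilinear_scope.

Section Spec.
Variable R : rcfType.
Local Notation toC := (real_complex R).

Lemma eig_transfer m (M : 'M[R]_m) (a : R) :
  eigenvalue (map_mx toC M) (toC a) = eigenvalue M a.
Proof. by rewrite !eigenvalue_root_char -map_char_poly fmorph_root. Qed.

Lemma toC_real (x : R) : toC x \is Num.real.
Proof. by apply/complex_realP; exists x. Qed.

Lemma conj_toC (x : R) : (toC x)^* = toC x.
Proof. exact/conj_Creal/toC_real. Qed.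

Lemma map_toC_conj m n (A : 'M[R]_(m, n)) : map_mx conjC (map_mx toC A) = map_mx toC A.
Proof. by apply/matrixP => i j; rewrite !mxE conj_toC. Qed.

Lemma sym_herm m (M : 'M[R]_m) : M^T = M -> (map_mx toC M) \is hermsymmx.
Proof.
move=> MT; apply: realsym_hermsym.
  apply/is_hermitianmxP; rewrite expr0 scale1r map_mx_id //.
  by rewrite map_trmx MT.
by apply/mxOverP => i j; rewrite mxE toC_real.
Qed.

End Spec.

Section Spec2.
Variable R : rcfType.
Local Notation toC := (real_complex R).

Lemma quadD m (u : 'rV[R[i]]_m) (E : 'rV[R[i]]_m) :
  (u *m diag_mx E *m u^t*) 0 0 = \sum_j E 0 j * (u 0 j * (u 0 j)^*).
Proof.
rewrite mul_mx_diag !mxE; apply: eq_bigr => j _; rewrite !mxE.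
by rewrite mulrAC mulrC.
Qed.

Lemma spectral_bound m (M : 'M[R]_m) :
  M^T = M -> (forall v : 'rV[R[i]]_m, 0 <= (v *m map_mx toC M *m v^t*) 0 0) ->
  M != 0 ->
  exists l, [/\ eigenvalue M l, 0 < l,
    (forall l', eigenvalue M l' -> 0 < l' -> l <= l') &
    forall w : 'rV[R]_m, l * (w *m M *m w^T) 0 0 <= (w *m M *m M *m w^T) 0 0].
Proof.
move=> MT psd M0.
set Mc := map_mx toC M.
have Mh := @sym_herm R m M MT.
have /orthomx_spectralP := hermitian_normalmx Mh.
set P := spectralmx Mc; set D := spectral_diag Mc => MPD.
have Pu : P \is unitarymx := spectral_unitarymx Mc.
rewrite invmx_unitary // -/Mc in MPD.
have PP : P *m P^t* = 1%:M := unitarymxP Pu.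
have PP' : P^t* *m P = 1%:M := mulmx1C PP.
have /mxOverP Dr := hermitian_spectral_diag_real Mh.
pose d i := complex.Re (D 0 i).
have Dd i : D 0 i = toC (d i) by rewrite /d RRe_real // Dr.
have rowEig i : row i P *m Mc = D 0 i *: row i P.
  rewrite MPD rowE !mulmxA -(mulmxA _ P) PP mulmx1 -rowE row_diag_mx.
  by rewrite -scalemxAl -rowE.
have rowPP i : (row i P *m (row i P)^t*) 0 0 = 1.
  have -> : (row i P *m (row i P)^t*) 0 0 = (P *m P^t*) i i.
    by rewrite !mxE; apply: eq_bigr => j _; rewrite !mxE.
  by rewrite PP mxE eqxx.
have rowP0 i : row i P != 0.
  apply/eqP => r0; have := rowPP i; rewrite r0 mul0mx mxE => /eqP.
  by rewrite eq_sym oner_eq0.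
have eigD i : eigenvalue M (d i).
  rewrite -eig_transfer -Dd; apply/eigenvalueP; exists (row i P) => //.
have dge0 i : 0 <= d i.
  have := psd (row i P); rewrite -/Mc rowEig -scalemxAl mxE rowPP mulr1.
  by rewrite Dd ler0c.
have d_l' l' : eigenvalue M l' -> exists i, d i = l'.
  rewrite -eig_transfer => /eigenvalueP [v vM v0].
  set u := v *m P^t*.
  have uD : u *m diag_mx D = toC l' *: u.
    have := congr1 (fun X => X *m P^t*) vM.
    by rewrite /= -/Mc MPD !mulmxA -(mulmxA _ P) PP mulmx1 -scalemxAl.
  have u0 : u != 0.
    apply: contraNneq v0 => u0; have : u *m P = v by rewrite /u -mulmxA PP' mulmx1.
    by rewrite u0 mul0mx => <-.
  have [j uj] : exists j, u 0 j != 0.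
    case: (boolP [exists j, u 0 j != 0]) => [/existsP//|/existsPn nz].
    by case/eqP: u0; apply/rowP => k; rewrite [RHS]mxE; have := nz k; rewrite negbK => /eqP.
  move/rowP: uD => /(_ j); rewrite mul_mx_diag [LHS]mxE [RHS]mxE.
  move=> e; exists j; apply: complexI; rewrite -Dd; apply: (mulIf uj).
  by rewrite mulrC e.
have [i0 di0] : exists i, 0 < d i.
  case: (boolP [exists i, 0 < d i]) => [/existsP//|/existsPn nz].
  have D0 : D = 0.
    apply/rowP => k; rewrite [RHS]mxE Dd; have := nz k.
    by rewrite lt0r dge0 andbT negbK => /eqP ->; rewrite rmorph0.
  case/eqP: M0; apply/eqP; rewrite -(map_mx_eq0 toC) -/Mc MPD D0.
  by rewrite linear0 mulmx0 mul0mx.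
case: (@arg_minP _ _ _ i0 (fun i => 0 < d i) d di0) => i ipos imin.
exists (d i); split => //.
  by move=> l' /d_l' [j <-] dj; exact: imin.
move=> w.
set wc := map_mx toC w.
set u := wc *m P^t*.
have wT : map_mx toC w^T = wc^t* by apply/matrixP => a b; rewrite !mxE (@conj_toC R).
have uT : u^t* = P *m wc^t* by rewrite /u trmx_mul map_mxM trmxCK.
have e00 (X : 'M[R]_1) : toC (X 0 0) = (map_mx toC X) 0 0 by rewrite mxE.
have k1 : toC ((w *m M *m w^T) 0 0) = (u *m diag_mx D *m u^t*) 0 0.
  rewrite e00 !map_mxM -/wc wT -/Mc MPD !mulmxA -/u -mulmxA -uT //.
have k2 : toC ((w *m M *m M *m w^T) 0 0) =
    (u *m diag_mx (\row_j (D 0 j * D 0 j)) *m u^t*) 0 0.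
  rewrite e00 !map_mxM -/wc wT -/Mc MPD !mulmxA -/u.
  rewrite -(mulmxA _ P (P^t*)) PP mulmx1 -mulmxA -uT -(mulmxA u) mulmx_diag //.
rewrite -subr_ge0 -ler0c.
have -> : toC ((w *m M *m M *m w^T) 0 0 - d i * (w *m M *m w^T) 0 0) =
  toC ((w *m M *m M *m w^T) 0 0) - toC (d i) * toC ((w *m M *m w^T) 0 0).
  by rewrite rmorphB rmorphM.
rewrite k1 k2 subr_ge0 !quadD mulr_sumr; apply: ler_sum => j _; rewrite [X in _ <= X * _]mxE.
rewrite !Dd mulrA -subr_ge0 -mulrBl; apply: mulr_ge0; last exact: mul_conjC_ge0.
have -> : toC (d j) * toC (d j) - toC (d i) * toC (d j) =
  toC (d j * d j - d i * d j) by rewrite rmorphB !rmorphM.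
rewrite ler0c subr_ge0.
have := dge0 j; rewrite le0r => /orP [/eqP -> | dj]; first by rewrite !mulr0.
by rewrite ler_pM2r // imin.
Qed.

Local Close Scope sesquilinear_scope.
Lemma norm2sq_tr n (x : 'cV[R]_n) : norm2sq x = (x^T *m x) 0 0.
Proof. by rewrite /norm2sq mxE; apply: eq_bigr => i _; rewrite !mxE expr2. Qed.

Lemma sq0 n (x : 'cV[R]_n) : (x^T *m x) 0 0 = 0 -> x = 0.
Proof.
rewrite -norm2sq_tr /norm2sq => h; apply/colP => i; rewrite mxE; apply/eqP.
by rewrite -sqrf_eq0; apply/eqP; exact: (psumr_eq0P (fun i _ => sqr_ge0 _) h).
Qed.

Lemma indep_bound m k (C : 'M[R]_(m, k)) :
  (forall b : 'cV_k, C *m b = 0 -> b = 0) -> (0 < k)%N ->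
  exists l : R, lambda_min_pp (C *m C^T) l /\
    forall mu : 'cV_k, l * norm2sq mu <= norm2sq (C *m mu).
Proof.
move=> Cind k0.
set M := C *m C^T; set G := C^T *m C.
have Gsym : G^T = G by rewrite /G trmx_mul trmxK.
have Ginj (b : 'cV_k) : G *m b = 0 -> b = 0.
  move=> Gb; apply: Cind; apply: sq0.
  by rewrite trmx_mul -mulmxA (mulmxA C^T) -/G Gb mulmx0 mxE.
have Gu : G \in unitmx.
  rewrite -row_free_unit -kermx_eq0; apply/eqP/row_matrixP => i; rewrite row0.
  apply: trmx_inj; rewrite trmx0; apply: Ginj.
  have := congr1 (row i) (mulmx_ker G); rewrite row_mul row0 => h.
  by rewrite -{1}Gsym -trmx_mul h trmx0.
have Msym : M^T = M by rewrite /M trmx_mul trmxK.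
have M0 : M != 0.
  apply/eqP => M0.
  have GG : G *m G = 0 by rewrite /G -mulmxA (mulmxA C) -/M M0 mul0mx mulmx0.
  have : G *m G \in unitmx by rewrite unitmx_mul Gu.
  rewrite GG => u0; have := mulmxV u0; rewrite mul0mx => /matrixP /(_ (Ordinal k0) (Ordinal k0)).
  by rewrite !mxE eqxx /= => /eqP; rewrite eq_sym oner_eq0.
have psd : forall v : 'rV[R[i]]_m, 0 <= (v *m map_mx toC M *m map_mx conjC v^T) 0 0.
  move=> v; set Cc := map_mx toC C; set x := v *m Cc.
  have eM : map_mx toC M = Cc *m Cc^T by rewrite map_mxM map_trmx.
  have eC : map_mx conjC Cc^T = Cc^T.
    by apply/matrixP => a b; rewrite !mxE (@conj_toC R).
  have -> : v *m map_mx toC M *m map_mx conjC v^T = x *m map_mx conjC x^T.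
    by rewrite eM /x trmx_mul map_mxM eC !mulmxA.
  rewrite mxE; apply: sumr_ge0 => j _; rewrite !mxE; exact: mul_conjC_ge0.
have [l [eig lpos lmin qb]] := @spectral_bound m M Msym psd M0.
exists l; split; first by split.
move=> mu.
have [w' Cw] : exists w', C^T *m w' = mu.
  by exists (C *m invmx G *m mu); rewrite !mulmxA -/G mulmxV // mul1mx.
have := qb w'^T; rewrite trmxK.
have -> : w'^T *m M *m w' = mu^T *m mu.
  by rewrite -Cw [in RHS]trmx_mul trmxK /M !mulmxA.
have -> : w'^T *m M *m M *m w' = (C *m mu)^T *m (C *m mu).
  by rewrite -Cw ![in RHS]trmx_mul trmxK /M !mulmxA.
by rewrite !norm2sq_tr.
Qed.
End Spec2.

End SpecPart.
Import SpecPart.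

Set Implicit Arguments. Unset Strict Implicit. Unset Printing Implicit Defensive.

Section Farkas.
Variable R : rcfType.

Definition Gz m N (G : 'M[R]_(m, N)) (z : 'cV[R]_m) (j : 'I_N) := \sum_i G i j * z i 0.
Definition dz m (d z : 'cV[R]_m) := \sum_i d i 0 * z i 0.
Definition fitsv N (cp cn : 'I_N -> bool) (nu : 'cV[R]_N) :=
  forall j, (0 < nu j 0 -> cp j) /\ (nu j 0 < 0 -> cn j).
Definition dualok m N (cp cn : 'I_N -> bool) (G : 'M[R]_(m, N)) (z : 'cV[R]_m) :=
  forall j, (cp j -> Gz G z j <= 0) /\ (cn j -> 0 <= Gz G z j).

Definition FarkasAlt m N cp cn (G : 'M[R]_(m, N)) (d : 'cV[R]_m) :=
  (exists nu, fitsv cp cn nu /\ G *m nu = d) \/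
  (exists z, dualok cp cn G z /\ 0 < dz d z).

Lemma dz_self_gt0 m (d : 'cV[R]_m) : d != 0 -> 0 < dz d d.
Proof.
move=> d0; rewrite lt0r sumr_ge0 ?andbT; last by move=> i _; rewrite -expr2 sqr_ge0.
apply: contra d0 => /eqP h; apply/eqP/colP => i; rewrite mxE.
have h' : \sum_i d i 0 ^+ 2 = 0 by rewrite -[RHS]h /dz; apply: eq_bigr => k _; rewrite expr2.
by have /eqP := @psumr_eq0P _ _ xpredT (fun k => d k 0 ^+ 2) (fun k _ => sqr_ge0 (d k 0)) h' i isT; rewrite sqrf_eq0 => /eqP.
Qed.

Lemma farkas_base m N cp cn (G : 'M[R]_(m, N)) d :
  (forall j, ~~ cp j && ~~ cn j) -> FarkasAlt cp cn G d.
Proof.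
move=> ina; case: (eqVneq d 0) => [->|d0].
  left; exists 0; split; last by rewrite mulmx0.
  by move=> j; rewrite mxE ltxx.
right; exists d; split; last exact: dz_self_gt0.
by move=> j; have /andP[/negbTE-> /negbTE->] := ina j.
Qed.



Lemma Gz_lin m N (G : 'M[R]_(m, N)) (a b : 'cV[R]_m) c j :
  Gz G (a - c *: b) j = Gz G a j - c * Gz G b j.
Proof. by rewrite /Gz mulr_sumr -sumrB; apply: eq_bigr => i _; rewrite !mxE; ring. Qed.

Lemma dz_lin m (d a b : 'cV[R]_m) c :
  dz d (a - c *: b) = dz d a - c * dz d b.
Proof. by rewrite /dz mulr_sumr -sumrB; apply: eq_bigr => i _; rewrite !mxE; ring. Qed.

Lemma farkas m : forall s N cp cn (G : 'M[R]_(m, N)) d,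
  (#|[pred j | cp j || cn j]| <= s)%N -> FarkasAlt cp cn G d.
Proof.
elim=> [|s IH] N cp cn G d hs.
  apply: farkas_base => j; move: hs; rewrite leqn0 => /eqP/card0_eq/(_ j).
  by rewrite !inE -negb_or => ->.
case: (pickP [pred j | cp j || cn j]) => [k /= kact|none]; last first.
  by apply: farkas_base => j; have := none j; rewrite /= -negb_or => ->.
pose cp' := fun j => cp j && (j != k); pose cn' := fun j => cn j && (j != k).
have hs' : (#|[pred j | cp' j || cn' j]| <= s)%N.
  move: hs; rewrite (cardD1 k) inE /= kact add1n ltnS; apply: leq_trans.
  apply: subset_leq_card; apply/subsetP => j; rewrite !inE /cp' /cn'.
  by case/orP => /andP[a b]; rewrite b ?a ?orbT.
have fitsW nu : fitsv cp' cn' nu -> fitsv cp cn nu.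
  by move=> f j; have [h1 h2] := f j; split => [/h1|/h2] /andP[].
case: (IH N cp' cn' G d hs') => [[nu [fnu Gnu]]|[z [dzz zpos]]].
  by left; exists nu; split => //; exact: fitsW.
pose g := Gz G z k.
have zok j : j != k -> (cp j -> Gz G z j <= 0) /\ (cn j -> 0 <= Gz G z j).
  move=> jk; have [h1 h2] := dzz j.
  by split=> c; [apply: h1|apply: h2]; rewrite /cp' /cn' c jk.
case: (boolP ((cp k ==> (g <= 0)) && (cn k ==> (0 <= g)))) => okk.
  right; exists z; split => // j; case: (eqVneq j k) => [->|jk]; last exact: zok.
  by move: okk => /andP[/implyP h1 /implyP h2].
have gpos : 0 < g -> cp k.
  move=> gp; apply: contraR okk => cpk; rewrite (negbTE cpk) /=.
  by apply/implyP => _; exact: ltW.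
have gneg : g < 0 -> cn k.
  move=> gn; apply: contraR okk => cnk; rewrite (negbTE cnk) andbT.
  by apply/implyP => _; exact: ltW.
have g0 : g != 0.
  by apply: contra okk => /eqP ->; rewrite lexx !implybT.
pose G' := \matrix_(i, j) (G i j - G i k * Gz G z j / g).
pose d' := \col_i (d i 0 - G i k * dz d z / g).
have G'z w j : Gz G' w j = Gz G w j - Gz G z j * Gz G w k / g.
  have -> : Gz G' w j = \sum_i (G i j * w i 0 - Gz G z j / g * (G i k * w i 0)).
    by rewrite [LHS]/Gz; apply: eq_bigr => i _; rewrite !mxE; ring.
  rewrite sumrB -mulr_sumr.
  change (\sum_i G i j * w i 0) with (Gz G w j).
  change (\sum_i G i k * w i 0) with (Gz G w k); ring.
have d'z w : dz d' w = dz d w - dz d z * Gz G w k / g.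
  have -> : dz d' w = \sum_i (d i 0 * w i 0 - dz d z / g * (G i k * w i 0)).
    by rewrite [LHS]/dz; apply: eq_bigr => i _; rewrite !mxE; ring.
  rewrite sumrB -mulr_sumr.
  change (\sum_i d i 0 * w i 0) with (dz d w).
  change (\sum_i G i k * w i 0) with (Gz G w k); ring.
case: (IH N cp' cn' G' d' hs') => [[nu [fnu Gnu]]|[z' [dzz' zpos']]].
  left.
  have nuk : nu k 0 = 0.
    have [h1 h2] := fnu k; rewrite /cp' /cn' eqxx !andbF in h1 h2.
    by case: (ltrgt0P (nu k 0)) => // [/h1|/h2].
  pose S := \sum_j Gz G z j * nu j 0.
  have Sle : S <= 0.
    apply: sumr_le0 => j _; have [h1 h2] := fnu j.
    case: (ltrgt0P (nu j 0)) => [p|n|->]; last by rewrite mulr0.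
      by apply: mulr_le0_ge0; [exact: (dzz j).1 (h1 p) | exact: ltW].
    by apply: mulr_ge0_le0; [exact: (dzz j).2 (h2 n) | exact: ltW].
  pose th := (dz d z - S) / g.
  have numpos : 0 < dz d z - S by rewrite subr_gt0 (le_lt_trans Sle).
  exists (nu + th *: delta_mx k 0); split.
    move=> j; rewrite !mxE; case: (eqVneq j k) => [->|jk].
      rewrite nuk add0r eqxx mulr1 /th; split => h.
        by apply: gpos; move: h; rewrite pmulr_rgt0 // invr_gt0.
      by apply: gneg; move: h; rewrite pmulr_rlt0 // invr_lt0.
    rewrite /= mulr0 addr0; exact: (fitsW _ fnu j).
  rewrite mulmxDr -scalemxAr -colE; apply/colP => i.
  move/colP: Gnu => /(_ i); rewrite !mxE => h.
  have e1 : \sum_j G' i j * nu j 0 =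
      \sum_j (G i j * nu j 0 - G i k / g * (Gz G z j * nu j 0)).
    by apply: eq_bigr => j _; rewrite !mxE; ring.
  rewrite e1 sumrB -mulr_sumr -/S in h.
  have -> : \sum_j G i j * nu j 0 = d i 0 - G i k * dz d z / g + G i k / g * S.
    by rewrite -h; ring.
  rewrite /th; field; exact: g0.
right; exists (z' - (Gz G z' k / g) *: z); split.
  move=> j; rewrite Gz_lin; case: (eqVneq j k) => [->|jk].
    have -> : Gz G z' k - Gz G z' k / g * Gz G z k = 0 by rewrite -/g; field.
    by split.
  have [h1 h2] := dzz' j; rewrite G'z in h1 h2.
  have -> : Gz G z' j - Gz G z' k / g * Gz G z j = Gz G z' j - Gz G z j * Gz G z' k / g.
    by ring.
  by split => c; [apply: h1|apply: h2]; rewrite /cp' /cn' c jk.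
rewrite dz_lin; move: zpos'; rewrite d'z.
have -> : dz d z' - dz d z * Gz G z' k / g = dz d z' - Gz G z' k / g * dz d z by ring.
by [].
Qed.


Lemma carath m n (A : 'M[R]_(m, n)) (cp cn : 'I_n -> bool) : forall k (f : 'I_k -> 'I_n) (mu : 'cV[R]_k),
  injective f -> (forall i, (0 < mu i 0 -> cp (f i)) /\ (mu i 0 < 0 -> cn (f i))) ->
  exists k' (f' : 'I_k' -> 'I_n) (mu' : 'cV[R]_k'),
    [/\ injective f', (forall i, (0 < mu' i 0 -> cp (f' i)) /\ (mu' i 0 < 0 -> cn (f' i))),
       colsub f' A *m mu' = colsub f A *m mu &
       forall b : 'cV[R]_k', colsub f' A *m b = 0 -> b = 0].
Proof.
elim=> [|k IH] f mu finj fmu.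
  by exists 0%N, f, mu; split => // b _; exact: flatmx0.
case: (classic (forall b : 'cV[R]_k.+1, colsub f A *m b = 0 -> b = 0)) => [ind|].
  by exists k.+1, f, mu.
move=> /not_all_ex_not [b hb]; have [Cb b0] := imply_to_and _ _ hb.
have [i1 bi1] : exists i, b i 0 != 0.
  case: (boolP [exists i, b i 0 != 0]) => [/existsP//|/existsPn nz].
  by case: b0; apply/colP => i; rewrite [RHS]mxE; have := nz i; rewrite negbK => /eqP.
pose F i := `|mu i 0 / b i 0|.
case: (@arg_minP _ _ _ i1 (fun i => b i 0 != 0) F bi1) => i0 bi0 imin.
pose t := mu i0 0 / b i0 0.
pose mu1 := mu - t *: b.
have mu1i0 : mu1 i0 0 = 0 by rewrite !mxE /t; field.
have sgn i : (0 < mu1 i 0 -> 0 < mu i 0) /\ (mu1 i 0 < 0 -> mu i 0 < 0).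
  rewrite !mxE; case: (eqVneq (b i 0) 0) => [->|bi]; first by rewrite mulr0 subr0.
  have h : `|t * b i 0| <= `|mu i 0|.
    have hh := imin i bi; rewrite /F /t in hh.
    have -> : `|mu i 0| = `|mu i 0 / b i 0| * `|b i 0| by rewrite -normrM divfK.
    by rewrite normrM ler_wpM2r.
  move: h; move: (mu i 0) (t * b i 0) => x y; rewrite ler_norml => /andP[h1 h2].
move: h1 h2; case: (lerP 0 x) => hx; [rewrite ger0_norm // | rewrite ltr0_norm //] => h1 h2;
    clear -hx h1 h2; split => ?; lra.
pose f' := f \o lift i0; pose mu' := \col_i mu1 (lift i0 i) 0.
have [||k' [f'' [mu'' [inj' fit' eq' ind']]]] := IH f' mu'.
- by move=> a c /finj/lift_inj.
- move=> i; rewrite mxE; have [s1 s2] := sgn (lift i0 i); have [h1 h2] := fmu (lift i0 i).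
  by split => h; [exact: h1 (s1 h) | exact: h2 (s2 h)].
exists k', f'', mu''; split => //.
rewrite eq'.
have -> : colsub f A *m mu = colsub f A *m mu1.
  by rewrite /mu1 mulmxBr -scalemxAr Cb scaler0 subr0.
apply/colP => r; rewrite [in RHS]mxE (bigD1_ord i0) //= mu1i0 mulr0 add0r.
by rewrite mxE; apply: eq_bigr => i _; rewrite !mxE.
Qed.

End Farkas.

Section Sh.
Variable R : rcfType.
Definition shs (t : R) := Num.sg t * Num.max (`|t| - 1) 0.

Lemma shs_ge1 t : 1 <= t -> shs t = t - 1.
Proof.
move=> h; have tp : 0 < t by apply: lt_le_trans h; exact: ltr01.
rewrite /shs gtr0_sg // mul1r gtr0_norm // max_l //; lra.
Qed.

Lemma shs_le1 t : t <= -1 -> shs t = t + 1.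
Proof.
move=> h; have tn : t < 0 by lra.
rewrite /shs ltr0_sg // ltr0_norm // max_l; last lra.
ring.
Qed.

Lemma shs_mid t : -1 <= t <= 1 -> shs t = 0.
Proof.
move=> /andP[h1 h2]; rewrite /shs max_r ?mulr0 //.
rewrite subr_le0 ler_norml; lra.
Qed.


Lemma shsN t : shs (- t) = - shs t.
Proof. by rewrite /shs sgrN normrN mulNr. Qed.

Lemma shs_key_pos (al c v w : R) : 0 < al -> 0 <= c -> 1 < v ->
  c * ((v - 1) + 2) <= al * (v - 1) ->
  c * w ^+ 2 <= al * w * (shs (v + w) - shs v).
Proof.
move=> alp c0 v1 h; rewrite (shs_ge1 (ltW v1)).
have cal : c <= al by nra.
case: (lerP 1 (v + w)) => t1.
  rewrite shs_ge1 //; have -> : v + w - 1 - (v - 1) = w by ring.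
  by rewrite -mulrA -expr2 ler_wpM2r // sqr_ge0.
case: (lerP (-1) (v + w)) => t2.
  rewrite shs_mid; last by rewrite t2 ltW.
  have hw1 : 0 <= - w by lra.
  have hw2 : - w <= (v - 1) + 2 by lra.
  have e1 : c * w ^+ 2 <= c * ((v - 1) + 2) * (- w).
    have cw : 0 <= c * (- w) by apply: mulr_ge0.
    nra.
  apply: (le_trans e1); have -> : al * w * (0 - (v - 1)) = al * (v - 1) * (- w) by ring.
  exact: ler_wpM2r.
rewrite shs_le1; last exact: ltW.
have hw : w + (v - 1) + 2 < 0 by lra.
have a2 : 0 < (v - 1) + 2 by lra.
suff : 0 <= ((v - 1) + 2) * (al * w * (v + w + 1 - (v - 1)) - c * w ^+ 2).
  by rewrite pmulr_rge0 // subr_ge0.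
have -> : ((v - 1) + 2) * (al * w * (v + w + 1 - (v - 1)) - c * w ^+ 2) =
   2 * al * w * (w + (v - 1) + 2) + (al * (v - 1) - c * ((v - 1) + 2)) * w ^+ 2.
  by ring.
apply: addr_ge0.
  by rewrite -mulrA -mulrA; apply: mulr_ge0; [lra|]; apply: mulr_ge0; [lra|]; nra.
by apply: mulr_ge0; [rewrite subr_ge0 | exact: sqr_ge0].
Qed.

Lemma shs_key (al c v w : R) : 0 < al -> 0 <= c -> shs v != 0 ->
  c * (`|al * shs v| + 2 * al) <= al * `|al * shs v| ->
  c * w ^+ 2 <= al * w * (shs (v + w) - shs v).
Proof.
move=> alp c0 sv h.
case: (ltrP 1 v) => v1.
  apply: shs_key_pos => //; move: h; rewrite (shs_ge1 (ltW v1)).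
  rewrite ger0_norm; last by apply: mulr_ge0; lra.
  have -> : c * (al * (v - 1) + 2 * al) = al * (c * (v - 1 + 2)) by ring.
  by rewrite ler_pM2l.
case: (ltrP v (-1)) => v2; last first.
  by move: sv; rewrite shs_mid ?eqxx // v2 v1.
have := @shs_key_pos al c (- v) (- w) alp c0.
have e1 : shs (- v + - w) = - shs (v + w) by rewrite -opprD shsN.
rewrite e1 shsN sqrrN.
have -> : al * - w * (- shs (v + w) - - shs v) = al * w * (shs (v + w) - shs v) by ring.
apply; first lra.
move: h; rewrite (shs_le1 (ltW v2)).
rewrite ltr0_norm; last by rewrite pmulr_rlt0 //; lra.
have -> : c * (- (al * (v + 1)) + 2 * al) = al * (c * (- v - 1 + 2)) by ring.
have -> : al * - (al * (v + 1)) = al * (al * (- v - 1)) by ring.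
by rewrite ler_pM2l.
Qed.

Lemma shs_cases t : (1 <= t /\ shs t = t - 1) \/ (t <= -1 /\ shs t = t + 1) \/
  (-1 <= t /\ t <= 1 /\ shs t = 0).
Proof.
case: (lerP 1 t) => h1; first by left; split => //; exact: shs_ge1.
case: (lerP t (-1)) => h2; first by right; left; split => //; exact: shs_le1.
right; right; split; first exact: ltW.
by split; [exact: ltW | apply: shs_mid; rewrite !ltW].
Qed.

Lemma shs_mono a b : a <= b -> shs a <= shs b.
Proof.
move=> ab.
case: (shs_cases a) => [[h1 ->]|[[h1 ->]|[h1 [h2 ->]]]];
case: (shs_cases b) => [[k1 ->]|[[k1 ->]|[k1 [k2 ->]]]]; lra.
Qed.

Lemma shs_term_ge0 al v w : 0 <= al -> 0 <= al * w * (shs (v + w) - shs v).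
Proof.
move=> al0; rewrite -mulrA; apply: mulr_ge0 => //.
case: (lerP 0 w) => w0.
  by apply: mulr_ge0 => //; rewrite subr_ge0; apply: shs_mono; lra.
apply: mulr_le0 => //; first exact: ltW.
by rewrite subr_le0; apply: shs_mono; lra.
Qed.

Lemma shs_T1 al c w : c <= al -> 0 < w -> c * w ^+ 2 <= al * w * (shs (1 + w) - shs 1).
Proof.
move=> ca w0; rewrite shs_ge1; last lra.
rewrite shs_mid; last by rewrite lexx andbT; lra.
have -> : al * w * (1 + w - 1 - 0) = al * w ^+ 2 by ring.
by apply: ler_wpM2r => //; exact: sqr_ge0.
Qed.

Lemma shs_Tm1 al c w : c <= al -> w < 0 -> c * w ^+ 2 <= al * w * (shs (-1 + w) - shs (-1)).
Proof.
move=> ca w0; rewrite shs_le1; last lra.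
rewrite shs_mid; last by rewrite lexx /=; lra.
have -> : al * w * (-1 + w + 1 - 0) = al * w ^+ 2 by ring.
by apply: ler_wpM2r => //; exact: sqr_ge0.
Qed.
End Sh.

Section Main.
Variable R : rcfType.

Lemma ystarE m n (A : 'M[R]_(m, n)) (al : R) (xs : 'cV[R]_n) (q : 'cV[R]_m) j :
  Ystar A al xs q -> al * shs ((A^T *m q) j 0) = xs j 0.
Proof. by move=> h; rewrite -h !mxE. Qed.

Lemma ystarI m n (A : 'M[R]_(m, n)) (al : R) (xs : 'cV[R]_n) (q : 'cV[R]_m) :
  (forall j, al * shs ((A^T *m q) j 0) = xs j 0) -> Ystar A al xs q.
Proof. by move=> h; apply/colP => j; rewrite -h !mxE. Qed.

Lemma AtzE m n (A : 'M[R]_(m, n)) (z : 'cV[R]_m) j : (A^T *m z) j 0 = Gz A z j.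
Proof. by rewrite mxE; apply: eq_bigr => i _; rewrite mxE. Qed.

Lemma norm2sq_sub m (d z : 'cV[R]_m) e :
  norm2sq (d - e *: z) = norm2sq d - 2 * e * dz d z + e ^+ 2 * norm2sq z.
Proof.
rewrite /norm2sq /dz.
rewrite (eq_bigr (fun i => d i 0 ^+ 2 - 2 * e * (d i 0 * z i 0) + e ^+ 2 * z i 0 ^+ 2)).
  by rewrite big_split sumrB /= -!mulr_sumr.
by move=> i _; rewrite !mxE; ring.
Qed.

Lemma term_le_sum n (F : 'I_n -> R) j : (forall i, 0 <= F i) -> F j <= \sum_i F i.
Proof.
by move=> h; rewrite (bigD1 j) //= lerDl; apply: sumr_ge0 => i _.
Qed.

Lemma feas m n (A : 'M[R]_(m, n)) (al : R) (xs : 'cV[R]_n) (y p z : 'cV[R]_m) :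
  0 < al -> Ystar A al xs p ->
  (forall q, Ystar A al xs q -> norm2sq (y - p) <= norm2sq (y - q)) ->
  dualok (fun j => (xs j 0 != 0) || ((A^T *m p) j 0 == 1))
         (fun j => (xs j 0 != 0) || ((A^T *m p) j 0 == -1)) A z ->
  dz (y - p) z <= 0.
Proof.
move=> alp Yp proj dual.
rewrite leNgt; apply/negP => Dpos.
set v := A^T *m p; set D := dz (y - p) z.
pose g j := Gz A z j.
have hv j : al * shs (v j 0) = xs j 0 by exact: ystarE.
have F1 j : xs j 0 != 0 -> g j = 0.
  move=> xj; have [h1 h2] := dual j; rewrite xj /= in h1 h2.
  by apply/eqP; rewrite eq_le h1 // h2.
have F2 j : xs j 0 = 0 -> -1 <= v j 0 <= 1.
  move=> xj; have : shs (v j 0) = 0.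
    by apply/eqP; move: (hv j); rewrite xj => /eqP; rewrite mulf_eq0 gt_eqF.
  case: (shs_cases (v j 0)) => [[h1 ->]|[[h1 ->]|[h1 [h2 _]]]] => h.
  - by apply/andP; split; lra.
  - by apply/andP; split; lra.
  - by rewrite h1 h2.
pose kap j := if `|v j 0| < 1 then (1 - `|v j 0|)^-1 else 1.
have kap0 j : 0 < kap j.
  by rewrite /kap; case: ifP => // h; rewrite invr_gt0 subr_gt0.
pose X := \sum_j `|g j| * kap j + norm2sq z / D.
have nz0 : 0 <= norm2sq z by apply: sumr_ge0 => i _; exact: sqr_ge0.
have X0 : 0 <= X.
  apply: addr_ge0; last by apply: divr_ge0 => //; exact: ltW.
  by apply: sumr_ge0 => j _; apply: mulr_ge0 => //; exact: ltW.
pose e := (1 + X)^-1.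
have e0 : 0 < e by rewrite invr_gt0; lra.
have eX : e * X < 1.
  by rewrite /e mulrC ltr_pdivrMr; lra.
have F3 j : e * (`|g j| * kap j) < 1.
  apply: le_lt_trans eX; apply: ler_wpM2l; first exact: ltW.
  have t1 : `|g j| * kap j <= \sum_i `|g i| * kap i.
    by have := @term_le_sum n (fun i => `|g i| * kap i) j; apply => i; apply: mulr_ge0 => //; exact: ltW.
  have t2 : 0 <= norm2sq z / D by apply: divr_ge0 => //; exact: ltW.
  rewrite /X; lra.
have F4 : e * norm2sq z < D.
  have : e * (norm2sq z / D) < 1.
    apply: le_lt_trans eX; apply: ler_wpM2l; first exact: ltW.
    by rewrite lerDr; apply: sumr_ge0 => j _; apply: mulr_ge0 => //; exact: ltW.
  by rewrite mulrA ltr_pdivrMr // mul1r.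
pose q := p + e *: z.
have vq j : (A^T *m q) j 0 = v j 0 + e * g j.
  by rewrite /q mulmxDr -scalemxAr [LHS]mxE [X in _ + X]mxE !AtzE.
have Yq : Ystar A al xs q.
  apply: ystarI => j; rewrite vq.
  case: (eqVneq (xs j 0) 0) => xj; last by rewrite F1 // mulr0 addr0.
  rewrite xj shs_mid ?mulr0 //.
  have /andP[v1 v2] := F2 j xj.
  have hF3 := F3 j; rewrite /kap in hF3.
  case: ifP hF3 => hv1 hF3.
    have hh : e * `|g j| < 1 - `|v j 0|.
      have p1 : 0 < 1 - `|v j 0| by rewrite subr_gt0.
      move: hF3; rewrite mulrA -ltr_pdivlMr ?invr_gt0 // invrK mul1r //.
    have : `|v j 0 + e * g j| < 1.
      apply: le_lt_trans (ler_normD _ _) _; rewrite normrM (gtr0_norm e0); lra.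
    by rewrite ltr_norml => /andP[a b]; apply/andP; split; lra.
  rewrite mulr1 in hF3.
  have habs : `|v j 0| = 1 by apply/eqP; rewrite eq_le ler_norml v1 v2 /= leNgt hv1.
  have [h1 h2] := dual j; rewrite xj eqxx /= in h1 h2.
  have ge := normr_ge0 (g j).
  case: (lerP 0 (v j 0)) => vs.
    have v_1 : v j 0 = 1 by rewrite -habs ger0_norm.
    have gl := h1 (introT eqP v_1).
    rewrite ler0_norm // mulrN in hF3.
    have eg : e * g j <= 0 by rewrite pmulr_rle0.
    by rewrite v_1; apply/andP; split; lra.
  have v_1 : v j 0 = -1 by rewrite -habs ltr0_norm // opprK.
  have gl := h2 (introT eqP v_1).
  rewrite ger0_norm // in hF3.
  have eg : 0 <= e * g j by rewrite pmulr_rge0.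
  by rewrite v_1; apply/andP; split; lra.
have := proj q Yq.
have -> : y - q = (y - p) - e *: z by rewrite /q opprD addrA.
rewrite norm2sq_sub -/D => h.
have h2 : e * (2 * D) <= e * (e * norm2sq z) by lra.
rewrite ler_pM2l // in h2.
move: Dpos; rewrite -/D => Dpos; clear -h2 F4 Dpos; lra.
Qed.


Lemma amgm (lam c mu w t : R) : 0 < lam -> 0 < c -> 0 <= t ->
  (0 < mu * w -> c * w ^+ 2 <= t) ->
  2 * lam * c * (mu * w) <= lam ^+ 2 * c * mu ^+ 2 + t.
Proof.
move=> l0 c0 t0 h; case: (lerP (mu * w) 0) => hw.
  have : 0 <= lam ^+ 2 * c * mu ^+ 2.
    by apply: mulr_ge0; [apply: mulr_ge0; [exact: sqr_ge0|exact: ltW]|exact: sqr_ge0].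
  have : 2 * lam * c * (mu * w) <= 0.
    by apply: mulr_ge0_le0 => //; apply: mulr_ge0; [apply: mulr_ge0|]; lra.
  lra.
have h1 := h hw.
have sq := mulr_ge0 (ltW c0) (sqr_ge0 (lam * mu - w)).
have e : c * (lam * mu - w) ^+ 2 = lam ^+ 2 * c * mu ^+ 2 + c * w ^+ 2 - 2 * lam * c * (mu * w)
  by ring.
rewrite e in sq; lra.
Qed.

Lemma sum_inj_le k n (f : 'I_k -> 'I_n) (F : 'I_n -> R) :
  injective f -> (forall j, 0 <= F j) -> \sum_i F (f i) <= \sum_j F j.
Proof.
move=> finj F0.
rewrite [X in _ <= X](bigID (fun j => j \in f @: [set: 'I_k])) /=.
rewrite -[X in X <= _]addr0 lerD //; last by apply: sumr_ge0.
rewrite big_imset /=; last by move=> a b _ _ /finj.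
have -> : \sum_(i in [set: 'I_k]) F (f i) = \sum_i F (f i) by apply: eq_bigl => i; rewrite in_setT.
by [].

Qed.

Lemma norm_chain m n k (A : 'M[R]_(m, n)) (f : 'I_k -> 'I_n) (mu : 'cV[R]_k) (d : 'cV[R]_m) :
  colsub f A *m mu = d -> norm2sq d = \sum_i mu i 0 * (A^T *m d) (f i) 0.
Proof.
move=> e.
have -> : norm2sq d = \sum_r d r 0 * (colsub f A *m mu) r 0.
  by rewrite e /norm2sq; apply: eq_bigr => r _; rewrite expr2.
rewrite (eq_bigr (fun r => \sum_i d r 0 * (A r (f i) * mu i 0))); last first.
  by move=> r _; rewrite mxE mulr_sumr; apply: eq_bigr => i _; rewrite mxE.
rewrite exchange_big; apply: eq_bigr => i _ /=.
rewrite mxE mulr_sumr; apply: eq_bigr => r _; rewrite mxE; ring.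
Qed.

Lemma inner_grad m n (A : 'M[R]_(m, n)) (b : 'cV[R]_m) (al : R) (xs : 'cV[R]_n) (y p : 'cV[R]_m) :
  A *m xs = b -> Ystar A al xs p ->
  inner (y - p) (gradf A b al y) =
  \sum_j al * (A^T *m (y - p)) j 0 *
     (shs ((A^T *m p) j 0 + (A^T *m (y - p)) j 0) - shs ((A^T *m p) j 0)).
Proof.
move=> Axs Yp.
have uE j : (A^T *m p) j 0 + (A^T *m (y - p)) j 0 = (A^T *m y) j 0.
  have uM : A^T *m y = A^T *m p + A^T *m (y - p) by rewrite -mulmxDr addrC subrK.
  by rewrite uM [RHS]mxE.
under [RHS]eq_bigr do rewrite uE.
set s := shrink (A^T *m y) - shrink (A^T *m p).
have gE : gradf A b al y = al *: (A *m s).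
  by rewrite /gradf -Axs -Yp /s mulmxBr scalerBr -scalemxAr addrC.
have sE j : s j 0 = shs ((A^T *m y) j 0) - shs ((A^T *m p) j 0) by rewrite /s !mxE.
rewrite gE /inner.
rewrite (eq_bigr (fun r => \sum_j al * ((y - p) r 0 * A r j) * s j 0)); last first.
  by move=> r _; rewrite !mxE !mulr_sumr; apply: eq_bigr => j _; ring.
rewrite exchange_big; apply: eq_bigr => j _ /=.
rewrite [(A^T *m _) j 0]mxE mulr_sumr mulr_suml; apply: eq_bigr => r _.
rewrite sE [A^T j r]mxE; ring.
Qed.

End Main.

Theorem mainTheorem17 (R : rcfType) (m n : nat) (A : 'M[R]_(m, n)) (b : 'cV[R]_m)
  (alpha : R) (xs : 'cV[R]_n) (lamA c : R) :
  A != 0 -> b != 0 -> (exists x : 'cV[R]_n, A *m x = b) -> 0 < alpha ->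
  P2sol A b alpha xs ->
  is_lambdaA A lamA -> is_supp_min alpha xs c ->
  0 < lamA * c /\
  forall y p : 'cV[R]_m, is_proj (Ystar A alpha xs) y p ->
    lamA * c * norm2sq (y - p) <= inner (y - p) (gradf A b alpha y).
Proof.
move=> A0 b0 _ alp [Axs _] [lamset lammin] [[i0 [xi0 ceq]] cmin].
have lam0 : 0 < lamA by case: lamset => k [f [_ [_ [_ [lp _]]]]].
have den0 (x : R) : 0 < `|x| + 2 * alpha.
  by apply: ltr_wpDl; [exact: normr_ge0 | apply: mulr_gt0].
have c0 : 0 < c.
  by rewrite ceq divr_gt0 // mulr_gt0 // normr_gt0.
split; first exact: mulr_gt0.
move=> y p [Yp proj].
set d := y - p.
set v := A^T *m p.
set w := A^T *m d.
pose cp j := (xs j 0 != 0) || (v j 0 == 1).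
pose cn j := (xs j 0 != 0) || (v j 0 == -1).
rewrite (inner_grad _ Axs Yp) -/d -/v -/w.
pose t j := alpha * w j 0 * (shs (v j 0 + w j 0) - shs (v j 0)).
have t0 j : 0 <= t j by apply: shs_term_ge0; exact: ltW.
have cal : c <= alpha.
  by rewrite ceq ler_pdivrMr // ler_pM2l // lerDl mulr_ge0 // ltW.
have key j nu : (0 < nu -> cp j) -> (nu < 0 -> cn j) -> 0 < nu * w j 0 ->
    c * w j 0 ^+ 2 <= t j.
  move=> h1 h2 pos.
  case: (eqVneq (xs j 0) 0) => xj; last first.
    have yE : alpha * shs (v j 0) = xs j 0 by exact: ystarE.
    apply: shs_key => //; first exact: ltW.
      by apply: contra xj => /eqP sv; rewrite -yE sv mulr0.
    by rewrite yE; have := cmin j xj; rewrite ler_pdivlMr.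
  case: (ltrgt0P nu) => [np|nn|n0]; last by rewrite n0 mul0r ltxx in pos.
    have vj : v j 0 = 1 by move: (h1 np); rewrite /cp xj eqxx /= => /eqP.
    have wp : 0 < w j 0 by rewrite pmulr_rgt0 in pos.
    by rewrite /t vj; exact: shs_T1.
  have vj : v j 0 = -1 by move: (h2 nn); rewrite /cn xj eqxx /= => /eqP.
  have wn : w j 0 < 0 by rewrite nmulr_rgt0 in pos.
  by rewrite /t vj; exact: shs_Tm1.
case: (@farkas R m #|[pred j | cp j || cn j]| n cp cn A d (leqnn _)) =>
  [[nu [fnu Anu]] | [z [dzz zpos]]]; last first.
  by have := feas alp Yp proj dzz; rewrite leNgt zpos.
have idinj : injective (@id 'I_n) by [].
have [k [f [mu [finj fmu Cmu ind]]]] := @carath R m n A cp cn n id nu idinj fnu.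
have Cd : colsub f A *m mu = d.
  by rewrite Cmu; have -> : colsub id A = A by apply/matrixP => i j; rewrite mxE.
have hmu : lamA * norm2sq mu <= norm2sq d.
  case: (posnP k) => [k0|kpos].
    have -> : norm2sq mu = 0.
      by rewrite /norm2sq; apply: big1 => i _; case: i => i ik; exfalso; move: ik; rewrite k0.
    by rewrite mulr0; apply: sumr_ge0 => i _; exact: sqr_ge0.
  have [l [lmp lb]] := @indep_bound R m k (colsub f A) ind kpos.
  have Cne : colsub f A != 0.
    apply/eqP => C0; have := ind (delta_mx (Ordinal kpos) 0).
    rewrite C0 mul0mx => /(_ erefl) /matrixP /(_ (Ordinal kpos) 0).
    by rewrite !mxE !eqxx /= => /eqP; rewrite oner_eq0.
  have lamle : lamA <= l.
    by apply: lammin; exists k, f; split => //; split.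
  apply: le_trans (_ : l * norm2sq mu <= _); last by rewrite -Cd; exact: lb.
  by apply: ler_wpM2r => //; apply: sumr_ge0 => i _; exact: sqr_ge0.
have nchain := norm_chain Cd.
have per i : 2 * lamA * c * (mu i 0 * w (f i) 0) <= lamA ^+ 2 * c * mu i 0 ^+ 2 + t (f i).
  apply: amgm => //; have [h1 h2] := fmu i; exact: key.
have sum1 : 2 * lamA * c * norm2sq d <= lamA ^+ 2 * c * norm2sq mu + \sum_i t (f i).
  rewrite nchain mulr_sumr /norm2sq mulr_sumr -big_split /=.
  by apply: ler_sum => i _; exact: per i.
have sum2 : \sum_i t (f i) <= \sum_j t j by apply: sum_inj_le.
have hm2 : lamA * c * (lamA * norm2sq mu) <= lamA * c * norm2sq d.
  by apply: ler_wpM2l => //; apply: ltW; exact: mulr_gt0.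
change (lamA * c * norm2sq d <= \sum_j t j).
lra.
Qed.
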